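(* Let $F$ be a field of characteristic zero and $A$ a unital associative $F$-algebra with $A=F1\oplus N$ as vector spaces, where $N$ is a nilpotent ideal of index $m$ (i.e., $m$ is least with $N^m=0$). Let $R$ be a Rota–Baxter operator of weight zero on $A$. Then (a) $\mathrm{Im}\,R\subseteq N$; (b) $\mathrm{rb}(A)\le 2m-1$.
   Context: A linear operator $R$ on $A$ is a Rota–Baxter operator of weight $0$ if $R(x)R(y)=R(R(x)y+xR(y))$ for all $x,y\in A$. The RB-index $\mathrm{rb}(A)$ is the least $n\in\mathbb N$ such that $R^n=0$ for every Rota–Baxter operator $R$ of weight zero on $A$ ($\infty$ if no such $n$ exists). *)

(* Defs.v *)
From HB Require Import structures.
From mathcomp Require Import all_boot all_order all_algebra.
Set Implicit Arguments. Unset Strict Implicit. Unset Printing Implicit Defensive.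
Import GRing.Theory.
Local Open Scope ring_scope.

Definition is_RB0 (F : fieldType) (A : algType F) (R : A -> A) : Prop :=
  linear R /\ forall x y : A, R x * R y = R (R x * y + x * R y).

Definition is_ideal (F : fieldType) (A : algType F) (N : pred A) : Prop :=
  [/\ 0 \in N,
      (forall x y, x \in N -> y \in N -> x + y \in N),
      (forall (c : F) x, x \in N -> c *: x \in N),
      (forall a x, x \in N -> a * x \in N) &
      (forall a x, x \in N -> x * a \in N)].

(* N^k = 0 : every product of k elements of N vanishes
   (N^k is spanned by such products). *)
Definition pow_ideal_zero (F : fieldType) (A : algType F) (N : pred A) (k : nat)
  : Prop :=
  forall xs : seq A, size xs = k -> all (fun x => x \in N) xs ->
    \prod_(x <- xs) x = 0.

Definition nil_index (F : fieldType) (A : algType F) (N : pred A) (m : nat)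
  : Prop :=
  pow_ideal_zero N m /\ forall k, (k < m)%N -> ~ pow_ideal_zero N k.

Definition unit_plus_N_decomp (F : fieldType) (A : algType F) (N : pred A)
  : Prop :=
  (forall a : A, exists c : F, exists n : A, n \in N /\ a = c%:A + n) /\
  (forall c : F, c%:A \in N -> c = 0).

Definition rb_le (F : fieldType) (A : algType F) (k : nat) : Prop :=
  forall R : A -> A, is_RB0 R -> forall x : A, iter k R x = 0.

(* Main.v *)
Require Import Defs.
From HB Require Import structures.
From mathcomp Require Import all_boot all_order all_algebra.
From mathcomp Require Import zify.
Import GRing.Theory.
Local Open Scope ring_scope.

Section Helpers.
Variables (F : fieldType) (A : algType F) (R : A -> A).
Hypothesis HL : linear R.

Lemma R0 : R 0 = 0.
Proof.
have := HL 1 0 0; rewrite !scale1r addr0 => H.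
by move/(congr1 (fun t => t - R 0)): H; rewrite addrK subrr => /esym.
Qed.

Lemma RD x y : R (x + y) = R x + R y.
Proof. by have := HL 1 x y; rewrite !scale1r. Qed.

Lemma RZ c x : R (c *: x) = c *: R x.
Proof. by have := HL c x 0; rewrite !addr0 R0 addr0. Qed.

Lemma RN x : R (- x) = - R x.
Proof. by rewrite -scaleN1r RZ scaleN1r. Qed.

Lemma RB x y : R (x - y) = R x - R y.
Proof. by rewrite RD RN. Qed.

Lemma RMn x n : R (x *+ n) = R x *+ n.
Proof. by elim: n => [|n IH]; rewrite ?mulr0n ?R0 // !mulrS RD IH. Qed.

Hypothesis HRB : forall x y : A, R x * R y = R (R x * y + x * R y).

Lemma base x : R 1 * R x - R (R 1 * x) = R (R x).
Proof. by rewrite HRB mul1r RD addrAC subrr add0r. Qed.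

Lemma adstep n x :
  R 1 * iter n.+1 R x - iter n.+1 R (R 1 * x) = iter n.+2 R x *+ n.+1.
Proof.
elim: n x => [|n IH] x; first by rewrite /= base mulr1n.
rewrite [iter n.+2 R x]iterS [iter n.+2 R (R 1 * x)]iterS.
have := base (iter n.+1 R x) => E.
have -> : R 1 * R (iter n.+1 R x) =
   R (R (iter n.+1 R x)) + R (R 1 * iter n.+1 R x).
  by rewrite -E subrK.
rewrite -addrA -RB IH RMn -!iterS.
by rewrite -mulrS.
Qed.

Fixpoint T (k : nat) (x : A) : A :=
  match k with
  | 0 => R x
  | k'.+1 => R 1 * T k' x - T k' (R 1 * x)
  end.

Lemma T_iter k x : T k x = iter k.+1 R x *+ k`!.
Proof.
elim: k x => [|k IH] x /=; first by rewrite mulr1n.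
rewrite !IH mulrnAr -mulrnBl adstep factS mulrnA.
by [].
Qed.

End Helpers.
Arguments R0 {F A R} HL.
Arguments RD {F A R} HL x y.
Arguments RZ {F A R} HL c x.
Arguments RN {F A R} HL x.
Arguments RB {F A R} HL x y.
Arguments RMn {F A R} HL x n.
Arguments adstep {F A R} HL HRB n x.
Arguments T {F A} R k x.
Arguments T_iter {F A R} HL HRB k x.

Lemma prod_nseq (F : fieldType) (A : algType F) k (b : A) :
  \prod_(x <- nseq k b) x = b ^+ k.
Proof.
by elim: k => [|k IH]; rewrite ?big_nil ?expr0 // /= big_cons IH exprS.
Qed.

Lemma partA_lem (F : fieldType) (A : algType F) (N : pred A) (m : nat)
  (R : A -> A) :
  is_ideal N -> pow_ideal_zero N m -> unit_plus_N_decomp N ->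
  is_RB0 R -> forall x : A, R x \in N.
Proof.
move=> [N0 ND NZ NL NR] Hm [Hdec _] [HL HRB].
have npow : forall b, b \in N -> b ^+ m = 0.
  move=> b Hb; rewrite -prod_nseq; apply: Hm; first by rewrite size_nseq.
  by rewrite all_nseq Hb orbT.
pose Im (y : A) := exists z, y = R z.
have ImD : forall y1 y2, Im y1 -> Im y2 -> Im (y1 + y2).
  by move=> y1 y2 [z1 ->] [z2 ->]; exists (z1 + z2); rewrite (RD HL).
have ImZ : forall c y, Im y -> Im (c *: y).
  by move=> c y [z ->]; exists (c *: z); rewrite (RZ HL).
have ImM : forall y1 y2, Im y1 -> Im y2 -> Im (y1 * y2).
  by move=> y1 y2 [z1 ->] [z2 ->]; eexists; apply: HRB.
move=> x; have [c [n [Hn Ex]]] := Hdec (R x).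
have [c0|c0] := eqVneq c 0; first by rewrite Ex c0 scale0r add0r.
have Hu : Im (R x) by exists x.
have key : forall k, exists2 s, Im s & (R x - c%:A) ^+ k = ((- c) ^+ k)%:A + s.
  elim=> [|k [s Hs IH]].
    by exists 0; [exists 0; rewrite (R0 HL) | rewrite expr0 scale1r addr0].
  exists ((- c) ^+ k *: R x + R x * s - c *: s).
    apply: (ImD); first by apply: (ImD); [apply: (ImZ) | apply: (ImM)].
    by rewrite -scaleNr; apply: (ImZ).
  rewrite exprS IH mulrBl !mulrDr mulr_algr !mulr_algl scalerA exprS mulNr scaleNr opprD. by rewrite addrCA.
have [s Hs Es] := key m.
have : (R x - c%:A) ^+ m = 0 by rewrite Ex addrC addKr npow.
rewrite Es => /eqP; rewrite addr_eq0 => /eqP Es'.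
have I1 : Im 1.
  have cm0 : (- c) ^+ m != 0 by rewrite expf_neq0 // oppr_eq0.
  have -> : (1 : A) = - ((- c) ^+ m)^-1 *: s.
    by rewrite scaleNr -scalerN -Es' scalerA mulVf // scale1r.
  by apply: (ImZ).
have [z Hz] := I1.
have H10 : (1 : A) = 0.
  have := HRB z z; rewrite -Hz !mulr1 !mul1r (RD HL) -Hz => H.
  have : (1 : A) + 1 - 1 = 1 - 1 by rewrite -H.
  by rewrite addrK subrr.
by rewrite -(mulr1 (R x)) H10 mulr0 N0.
Qed.
Arguments partA_lem {F A N m R}.


Theorem theorem14 (F : fieldType) (A : algType F) (N : pred A) (m : nat)
  (R : A -> A) :
  [pchar F] =i pred0 ->
  is_ideal N -> nil_index N m -> unit_plus_N_decomp N ->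
  is_RB0 R ->
  (forall x : A, R x \in N) /\ rb_le A (2 * m - 1).
Proof.
move=> Hch HI [Hm _] Hdec HRB.
split; first exact: (partA_lem HI Hm Hdec HRB).
move=> R' HR' x.
have HA := partA_lem HI Hm Hdec HR'.
case: HR' => HL HRB'.
case: m Hm => [|m] Hm.
  have := Hm [::] erefl isT; rewrite big_nil => H10.
  by rewrite /= -(mulr1 x) H10 mulr0.
have Ha : R' 1 \in N by apply: HA.
have fact2 : forall p y, (m <= p)%N -> y \in N -> R' 1 ^+ p * y = 0.
  move=> p y Hp Hy; rewrite -(subnK Hp) exprD -mulrA.
  have -> : R' 1 ^+ m * y = 0.
    have := Hm (nseq m (R' 1) ++ [:: y]).
    rewrite big_cat /= prod_nseq big_seq1; apply.
      by rewrite size_cat size_nseq /= addn1.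
    by rewrite all_cat all_nseq Ha orbT /= Hy.
  by rewrite mulr0.
have fact1 : forall p, (m.+1 <= p)%N -> R' 1 ^+ p = 0.
  move=> p Hp; rewrite -(subnK Hp) exprD exprSr.
  by rewrite (fact2 m) ?mulr0.
have vanish : forall k i j y, (2 * m <= i + j + k)%N ->
    R' 1 ^+ i * T R' k (R' 1 ^+ j * y) = 0.
  elim=> [|k IH] i j y H /=.
    case: (leqP m i) => Hi; first by apply: fact2.
    by rewrite (fact1 j) ?mul0r ?(R0 HL) ?mulr0 //; lia.
  rewrite mulrBr !mulrA -exprS -exprSr !IH ?subrr //; lia.
have := vanish (2 * m)%N 0%N 0%N x (leqnn _).
rewrite expr0 !mul1r (T_iter HL HRB') => H.
have -> : (2 * m.+1 - 1 = (2 * m).+1)%N by lia.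
have nz : (((2 * m)`!)%:R : F) != 0.
  by move/pcharf0P: Hch => ->; rewrite -lt0n fact_gt0.
move: H; rewrite -scaler_nat => H.
by rewrite -[LHS]scale1r -(mulVf nz) -scalerA H scaler0.
Qed.
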